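(* Let $A\subseteq(0,1)$ be non-empty. The following are equivalent: (1) $A=f^{-1}\{0\}$ for some computable $f:[0,1]\to\mathbb R$ with $f(0)\cdot f(1)<0$; (2) $A=B\cup\{x\}$ for some $B\subseteq(0,1)$ that is co-c.e. closed in $[0,1]$ and some computable point $x\in(0,1)$; (3) $A$ is co-c.e. closed in $[0,1]$ and contains a computable point $x\in(0,1)$.
   Context: A set $B\subseteq[0,1]$ is co-c.e. closed in $[0,1]$ if it is closed and there is a computable enumeration of rational open intervals (open in $[0,1]$) whose union is $[0,1]\setminus B$. Computable real numbers and computable functions $f:[0,1]\to\mathbb R$ are meant in the usual sense of computable analysis. *)

(* Defs.v *)
From Stdlib Require Import Reals Lra List.
From Stdlib Require Export Rtopology.
Import ListNotations.
Open Scope R_scope.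

Inductive code : Type :=
| cZero : code
| cSucc : code
| cProj : nat -> code
| cComp : code -> list code -> code
| cPrec : code -> code -> code
| cMin  : code -> code.

Inductive eval : code -> list nat -> nat -> Prop :=
| ev_zero : forall v, eval cZero v 0
| ev_succ : forall v, eval cSucc v (S (hd 0%nat v))
| ev_proj : forall i v, eval (cProj i) v (nth i v 0%nat)
| ev_comp : forall f gs v ws y,
    evals gs v ws -> eval f ws y -> eval (cComp f gs) v y
| ev_prec0 : forall f g v y, eval f v y -> eval (cPrec f g) (0%nat :: v) y
| ev_precS : forall f g n v r y,
    eval (cPrec f g) (n :: v) r -> eval g (n :: r :: v) y ->
    eval (cPrec f g) (S n :: v) y
| ev_min : forall f v n,
    eval f (n :: v) 0%nat ->
    (forall m, (m < n)%nat -> exists k, eval f (m :: v) (S k)) ->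
    eval (cMin f) v n
with evals : list code -> list nat -> list nat -> Prop :=
| evs_nil : forall v, evals [] v []
| evs_cons : forall g gs v y ys,
    eval g v y -> evals gs v ys -> evals (g :: gs) v (y :: ys).

Definition comp1 (g : nat -> nat) : Prop :=
  exists c, forall a, eval c [a] (g a).
Definition comp4 (g : nat -> nat -> nat -> nat -> nat) : Prop :=
  exists c, forall a b d e, eval c [a; b; d; e] (g a b d e).

Definition QR (p q d : nat) : R := (INR p - INR q) / (INR d + 1).

Definition computable_real (x : R) : Prop :=
  exists p q d : nat -> nat, comp1 p /\ comp1 q /\ comp1 d /\
    forall n, Rabs (QR (p n) (q n) (d n) - x) <= (/2) ^ n.

(* B is co-c.e. closed in [0,1]: B subset of [0,1], closed, and [0,1]\B is the
   union of a computable enumeration of rational intervals (a_n,b_n) /\ [0,1]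
   (which are exactly the rational open intervals open in [0,1]; empty ones
   allowed when a_n >= b_n). *)
Definition co_ce_closed (B : R -> Prop) : Prop :=
  (forall x, B x -> 0 <= x <= 1) /\ closed_set B /\
  exists a1 a2 a3 b1 b2 b3 : nat -> nat,
    comp1 a1 /\ comp1 a2 /\ comp1 a3 /\ comp1 b1 /\ comp1 b2 /\ comp1 b3 /\
    forall x, 0 <= x <= 1 ->
      (~ B x <-> exists n, QR (a1 n) (a2 n) (a3 n) < x < QR (b1 n) (b2 n) (b3 n)).

(* computable f : [0,1] -> R (Grzegorczyk/Ko characterisation): a computable
   modulus of uniform continuity on [0,1] together with a computable map giving
   2^-n approximations of f at rational points of [0,1]. Values outside [0,1]
   are irrelevant. *)
Definition computable_fun (f : R -> R) : Prop :=
  (exists m : nat -> nat, comp1 m /\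
     forall n x y, 0 <= x <= 1 -> 0 <= y <= 1 -> Rabs (x - y) <= (/2) ^ (m n) ->
       Rabs (f x - f y) <= (/2) ^ n) /\
  (exists g1 g2 g3 : nat -> nat -> nat -> nat -> nat,
     comp4 g1 /\ comp4 g2 /\ comp4 g3 /\
     forall p q d n, 0 <= QR p q d <= 1 ->
       Rabs (QR (g1 p q d n) (g2 p q d n) (g3 p q d n) - f (QR p q d)) <= (/2) ^ n).

(* Main.v *)
Require Import Defs.
From Stdlib Require Import Reals.
Open Scope R_scope.
From Stdlib Require Import Lra Lia List Arith ClassicalEpsilon Classical ZArith FunctionalExtensionality PropExtensionality.
Import ListNotations.

Open Scope nat_scope.

Fixpoint cconst (k:nat) : code := match k with 0 => cZero | S k => cComp cSucc [cconst k] end.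
Lemma ev_const k v : eval (cconst k) v k.
Proof. induction k; simpl. constructor. econstructor. econstructor. apply IHk. constructor.
  change (S k) with (S (hd 0%nat [k])). constructor. Qed.

Lemma ev_proj' i v y : nth i v 0%nat = y -> eval (cProj i) v y.
Proof. intros <-. constructor. Qed.

Definition ADD := cPrec (cProj 0) (cComp cSucc [cProj 1]).
Lemma ev_ADD n y : eval ADD [n; y] (n + y).
Proof. induction n; simpl. constructor. now apply ev_proj'.
  eapply ev_precS. apply IHn. econstructor. econstructor. now apply ev_proj'. constructor.
  change (S (n+y)) with (S (hd 0%nat [n+y])). constructor. Qed.

Definition MUL := cPrec cZero (cComp ADD [cProj 1; cProj 2]).
Lemma ev_MUL n y : eval MUL [n; y] (n * y).
Proof. induction n; simpl. constructor. constructor.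
  eapply ev_precS. apply IHn. econstructor. econstructor. now apply ev_proj'.
  econstructor. now apply ev_proj'. constructor.
  replace (y + n * y)%nat with (n*y + y)%nat by lia. apply ev_ADD. Qed.

Definition PRED := cPrec cZero (cProj 0).
Lemma ev_PRED n : eval PRED [n] (Nat.pred n).
Proof. induction n; simpl. constructor. constructor.
  eapply ev_precS. apply IHn. now apply ev_proj'. Qed.

Definition SUBR := cPrec (cProj 0) (cComp PRED [cProj 1]).
Lemma ev_SUBR n x : eval SUBR [n; x] (x - n).
Proof. induction n; simpl. constructor. apply ev_proj'. simpl; lia.
  eapply ev_precS. apply IHn. econstructor. econstructor. now apply ev_proj'. constructor.
  replace (x - S n)%nat with (Nat.pred (x - n)) by lia. apply ev_PRED. Qed.

Definition POW := cPrec (cconst 1) (cComp MUL [cProj 1; cProj 2]).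
Lemma ev_POW n x : eval POW [n; x] (x ^ n).
Proof. induction n; simpl. constructor. apply ev_const.
  eapply ev_precS. apply IHn. econstructor. econstructor. now apply ev_proj'.
  econstructor. now apply ev_proj'. constructor.
  rewrite Nat.mul_comm. apply ev_MUL. Qed.

Definition mu (t : nat -> nat) : nat :=
  match excluded_middle_informative (exists n, t n = 0%nat /\ forall m, (m < n)%nat -> t m <> 0%nat) with
  | left H => proj1_sig (constructive_indefinite_description _ H)
  | right _ => 0%nat end.

Lemma least_ex (t : nat -> nat) : (exists n, t n = 0%nat) ->
  exists n, t n = 0%nat /\ forall m, (m < n)%nat -> t m <> 0%nat.
Proof. intros [n Hn]. revert Hn. induction n as [n IH] using (well_founded_induction lt_wf).
  intros Hn. destruct (classic (exists m, (m < n)%nat /\ t m = 0%nat)) as [[m [Hm1 Hm2]]|H].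
  - exact (IH m Hm1 Hm2).
  - exists n. split; auto. intros m Hm Hc. apply H. eauto. Qed.

Lemma mu_spec t : (exists n, t n = 0%nat) -> t (mu t) = 0%nat /\ forall m, (m < mu t)%nat -> t m <> 0%nat.
Proof. intros H. apply least_ex in H. unfold mu. destruct excluded_middle_informative as [H'|H'].
  - destruct constructive_indefinite_description as [n Hn]. simpl. exact Hn.
  - contradiction. Qed.

Lemma mu_le t n : t n = 0%nat -> (mu t <= n)%nat.
Proof. intros H. destruct (mu_spec t (ex_intro _ n H)) as [_ H2].
  destruct (le_lt_dec (mu t) n); auto. exfalso; exact (H2 n l H). Qed.

Definition DIVT := cComp SUBR [cComp MUL [cComp ADD [cProj 0; cconst 1]; cProj 2]; cComp ADD [cProj 1; cconst 1]].
Definition DIV := cMin DIVT.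
Lemma ev_bin F a b v x y z : eval F [x;y] z -> eval a v x -> eval b v y -> eval (cComp F [a;b]) v z.
Proof. intros. econstructor; [|eauto]. repeat (constructor; auto). Qed.
Lemma ev_DIVT q x y : eval DIVT [q; x; y] (x + 1 - (q+1)*y).
Proof. eapply ev_bin. apply ev_SUBR. eapply ev_bin. apply ev_MUL.
  eapply ev_bin. apply ev_ADD. now apply ev_proj'. apply ev_const. now apply ev_proj'.
  eapply ev_bin. apply ev_ADD. now apply ev_proj'. apply ev_const. Qed.

Lemma ev_DIV x y : (0 < y)%nat -> eval DIV [x; y] (x / y).
Proof. intros Hy. constructor.
  - replace 0%nat with (x + 1 - (x/y+1)*y)%nat. apply ev_DIVT.
    pose proof (Nat.div_mod x y ltac:(lia)). pose proof (Nat.mod_upper_bound x y ltac:(lia)). nia.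
  - intros m Hm. exists (x - (m+1)*y)%nat. replace (S (x - (m+1)*y)) with (x + 1 - (m+1)*y)%nat.
    apply ev_DIVT. pose proof (Nat.div_mod x y ltac:(lia)). nia. Qed.

Inductive ex : Type :=
| EV (i:nat) | EC (k:nat) | EAdd (a b:ex) | ESub (a b:ex) | EMul (a b:ex) | EPow (a b:ex) | EDiv (a b:ex)
| EMu (ar:nat) (t:ex) | ERec (ar:nat) (b s e:ex)
| EX1 (c:code) (f:nat->nat) (a:ex)
| EX4 (c:code) (f:nat->nat->nat->nat->nat) (a b d e:ex).

Definition plist (ar:nat) (v:list nat) := map (fun i => nth i v 0%nat) (seq 0 ar).
Fixpoint rec (b:nat) (s:nat->nat->nat) (n:nat) : nat := match n with 0 => b | S j => s j (rec b s j) end.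

Fixpoint den (e:ex) (v:list nat) : nat :=
  match e with
  | EV i => nth i v 0%nat | EC k => k
  | EAdd a b => den a v + den b v | ESub a b => den a v - den b v
  | EMul a b => den a v * den b v | EPow a b => den a v ^ den b v
  | EDiv a b => den a v / den b v
  | EMu ar t => mu (fun n => den t (n :: plist ar v))
  | ERec ar b s e => rec (den b (plist ar v)) (fun j r => den s (j :: r :: plist ar v)) (den e v)
  | EX1 c f a => f (den a v)
  | EX4 c f a b d e => f (den a v) (den b v) (den d v) (den e v)
  end.

Fixpoint wfv (e:ex) (v:list nat) : Prop :=
  match e with
  | EV _ | EC _ => True
  | EAdd a b | ESub a b | EMul a b | EPow a b => wfv a v /\ wfv b v
  | EDiv a b => wfv a v /\ wfv b v /\ (0 < den b v)%nat
  | EMu ar t => (exists n, den t (n :: plist ar v) = 0%nat) /\ forall n, wfv t (n :: plist ar v)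
  | ERec ar b s e => wfv b (plist ar v) /\
      (forall j, (j < den e v)%nat -> wfv s (j :: rec (den b (plist ar v)) (fun j r => den s (j :: r :: plist ar v)) j :: plist ar v)) /\ wfv e v
  | EX1 c f a => (forall x, eval c [x] (f x)) /\ wfv a v
  | EX4 c f a b d e => (forall x y z w, eval c [x;y;z;w] (f x y z w)) /\ wfv a v /\ wfv b v /\ wfv d v /\ wfv e v
  end.

Definition projs ar := map cProj (seq 0 ar).
Fixpoint comp (e:ex) : code :=
  match e with
  | EV i => cProj i | EC k => cconst k
  | EAdd a b => cComp ADD [comp a; comp b] | ESub a b => cComp SUBR [comp b; comp a]
  | EMul a b => cComp MUL [comp a; comp b] | EPow a b => cComp POW [comp b; comp a]
  | EDiv a b => cComp DIV [comp a; comp b]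
  | EMu ar t => cComp (cMin (comp t)) (projs ar)
  | ERec ar b s e => cComp (cPrec (comp b) (comp s)) (comp e :: projs ar)
  | EX1 c f a => cComp c [comp a]
  | EX4 c f a b d e => cComp c [comp a; comp b; comp d; comp e]
  end.

Lemma evals_projs ar v : evals (projs ar) v (plist ar v).
Proof. unfold projs, plist. generalize (seq 0 ar). intros l; induction l; simpl; constructor. constructor. auto. Qed.

Lemma comp_ok e : forall v, wfv e v -> eval (comp e) v (den e v).
Proof.
  induction e; simpl; intros v W.
  - constructor.
  - apply ev_const.
  - destruct W. econstructor. repeat (constructor; auto). apply ev_ADD.
  - destruct W. econstructor. repeat (constructor; auto). apply ev_SUBR.
  - destruct W. econstructor. repeat (constructor; auto). apply ev_MUL.
  - destruct W. econstructor. repeat (constructor; auto). apply ev_POW.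
  - destruct W as [? [? ?]]. econstructor. repeat (constructor; auto). apply ev_DIV; auto.
  - destruct W as [Hex Hw]. econstructor. apply evals_projs.
    destruct (mu_spec _ Hex) as [H1 H2]. constructor.
    + set (m := mu _) in *. rewrite <- H1. apply IHe. auto.
    + intros m Hm. exists (Nat.pred (den e (m :: plist ar v))).
      replace (S (Nat.pred (den e (m :: plist ar v)))) with (den e (m :: plist ar v)).
      apply IHe; auto. specialize (H2 m Hm). lia.
  - destruct W as [Wb [Ws We]]. econstructor. constructor. apply IHe3; auto. apply evals_projs.
    assert (forall n, (n <= den e3 v)%nat -> eval (cPrec (comp e1) (comp e2)) (n :: plist ar v)
       (rec (den e1 (plist ar v)) (fun j r => den e2 (j :: r :: plist ar v)) n)) as HH.
    { intros n. induction n; simpl; intros Hn.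
      + constructor. apply IHe1; auto.
      + econstructor. apply IHn. lia. apply IHe2. apply Ws. lia. }
    apply HH. lia.
  - destruct W. econstructor. repeat (constructor; auto). auto.
  - destruct W as [? [? [? [? ?]]]]. econstructor. repeat (constructor; auto). auto.
Qed.

Lemma comp1_ex (E:ex) : (forall a, wfv E [a]) -> comp1 (fun a => den E [a]).
Proof. intros H. exists (comp E). intros a. apply comp_ok, H. Qed.
Lemma comp4_ex (E:ex) : (forall a b d e, wfv E [a;b;d;e]) -> comp4 (fun a b d e => den E [a;b;d;e]).
Proof. intros H. exists (comp E). intros. apply comp_ok, H. Qed.
Lemma comp1_code f : comp1 f -> { c | forall a, eval c [a] (f a) }.
Proof. intros H. apply constructive_indefinite_description. exact H. Qed.
Lemma comp4_code f : comp4 f -> { c | forall a b d e, eval c [a;b;d;e] (f a b d e) }.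
Proof. intros H. apply constructive_indefinite_description. exact H. Qed.

Open Scope R_scope.

Ltac rabs := unfold Rabs in *; repeat match goal with
  | |- context [Rcase_abs ?x] => destruct (Rcase_abs x)
  | H : context [Rcase_abs ?x] |- _ => destruct (Rcase_abs x) end; try lra.

Lemma INR_sub a b : INR (a - b) = Rmax 0 (INR a - INR b).
Proof. destruct (le_lt_dec b a).
  - rewrite minus_INR; auto. apply le_INR in l. unfold Rmax; destruct Rle_dec; lra.
  - replace (a - b)%nat with 0%nat by lia. apply lt_INR in l. unfold Rmax; destruct Rle_dec; simpl; lra. Qed.

Lemma INR_min a b : INR (Nat.min a b) = Rmin (INR a) (INR b).
Proof. destruct (le_lt_dec a b).
  - rewrite Nat.min_l; auto. apply le_INR in l. unfold Rmin; destruct Rle_dec; lra.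
  - rewrite Nat.min_r; [|lia]. apply lt_INR in l. unfold Rmin; destruct Rle_dec; lra. Qed.

Lemma INR_ge0 n : 0 <= INR n. Proof. apply pos_INR. Qed.

Lemma INR_div N Y : (0 < Y)%nat -> INR (N / Y) <= INR N / INR Y < INR (N / Y) + 1.
Proof. intros HY. pose proof (Nat.div_mod N Y ltac:(lia)) as E.
  pose proof (Nat.mod_upper_bound N Y ltac:(lia)) as E2.
  assert (HY' : 0 < INR Y) by (apply lt_0_INR; lia).
  assert (INR N = INR Y * INR (N/Y) + INR (N mod Y)) as E3.
  { rewrite E at 1. rewrite plus_INR, mult_INR. reflexivity. }
  apply lt_INR in E2. pose proof (INR_ge0 (N mod Y)).
  split.
  - apply Rmult_le_reg_r with (INR Y); auto. unfold Rdiv. rewrite Rmult_assoc, Rinv_l; lra.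
  - apply Rmult_lt_reg_r with (INR Y); auto. unfold Rdiv. rewrite Rmult_assoc, Rinv_l; lra. Qed.

Lemma INR_pow2 n : INR (2 ^ n) = 2 ^ n.
Proof. rewrite pow_INR. reflexivity. Qed.

Lemma pow2_pos n : 0 < 2 ^ n. Proof. apply pow_lt; lra. Qed.
Lemma half_pos n : 0 < (/2) ^ n. Proof. apply pow_lt; lra. Qed.
Lemma half_inv n : (/2) ^ n = / 2 ^ n. Proof. apply pow_inv. Qed.
Lemma half_mul n : (/2) ^ n * 2 ^ n = 1.
Proof. rewrite half_inv. apply Rinv_l. apply Rgt_not_eq, pow2_pos. Qed.
Lemma half_S n : (/2) ^ S n = (/2) ^ n / 2. Proof. simpl. lra. Qed.
Lemma half_add a b : (/2) ^ (a + b) = (/2)^a * (/2)^b. Proof. apply pow_add. Qed.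
Lemma half_le a b : (a <= b)%nat -> (/2) ^ b <= (/2) ^ a.
Proof. intros H. induction H. lra. rewrite half_S. pose proof (half_pos m). lra. Qed.
Lemma half_lt1 n : (/2)^n <= 1. Proof. apply (half_le 0). lia. Qed.

Lemma half_small eps : 0 < eps -> exists N, (/2) ^ N < eps.
Proof. intros He. destruct (pow_lt_1_zero (/2) ltac:(rewrite Rabs_pos_eq; lra) eps He) as [N HN].
  exists N. specialize (HN N (le_n _)). rewrite Rabs_pos_eq in HN; auto. left; apply half_pos. Qed.

Lemma le_eps a b c : (forall N, a <= b + c * (/2) ^ N) -> a <= b.
Proof. intros H. destruct (Rle_dec a b); auto. exfalso.
  assert (0 < (a - b) / (Rabs c + 1)). { apply Rdiv_lt_0_compat. lra. pose proof (Rabs_pos c); lra. }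
  destruct (half_small _ H0) as [N HN]. specialize (H N).
  pose proof (half_pos N). assert (c * (/2)^N <= Rabs c * (/2)^N).
  { apply Rmult_le_compat_r; [lra|]. apply Rle_abs. }
  assert ((Rabs c + 1) * (/2)^N < a - b).
  { apply Rmult_lt_reg_r with (/ (Rabs c + 1)). apply Rinv_0_lt_compat. pose proof (Rabs_pos c); lra.
    replace ((Rabs c + 1) * (/2)^N * / (Rabs c + 1)) with ((/2)^N). unfold Rdiv in HN. lra.
    field. pose proof (Rabs_pos c); lra. }
  lra. Qed.

Lemma zero_eps a : (forall N, Rabs a <= (/2) ^ N) -> a = 0.
Proof. intros H. assert (Rabs a <= 0). { apply (le_eps _ _ 1). intros N. specialize (H N). lra. }
  pose proof (Rabs_pos a). destruct (Req_dec a 0); auto. exfalso; apply (Rabs_no_R0 a); auto; lra. Qed.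

Lemma lim_le (u : nat -> R) l c K : Un_cv u l -> (forall n, (K <= n)%nat -> u n <= c) -> l <= c.
Proof. intros Hc Hu. destruct (Rle_dec l c); auto. exfalso.
  destruct (Hc (l - c) ltac:(lra)) as [N HN]. specialize (HN (Nat.max N K) ltac:(lia)).
  specialize (Hu (Nat.max N K) ltac:(lia)). unfold R_dist in HN. rabs. Qed.

Lemma lim_ge (u : nat -> R) l c K : Un_cv u l -> (forall n, (K <= n)%nat -> c <= u n) -> c <= l.
Proof. intros Hc Hu. destruct (Rle_dec c l); auto. exfalso.
  destruct (Hc (c - l) ltac:(lra)) as [N HN]. specialize (HN (Nat.max N K) ltac:(lia)).
  specialize (Hu (Nat.max N K) ltac:(lia)). unfold R_dist in HN. rabs. Qed.

Lemma QR_val p q d : QR p q d = (INR p - INR q) / (INR d + 1).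
Proof. reflexivity. Qed.

Lemma INR_pm1 n : (0 < n)%nat -> INR (n - 1) + 1 = INR n.
Proof. intros H. rewrite minus_INR by lia. simpl. lra. Qed.

Lemma Rmin_lip a b c d e : Rabs (a - c) <= e -> Rabs (b - d) <= e -> Rabs (Rmin a b - Rmin c d) <= e.
Proof. intros. unfold Rmin. repeat destruct Rle_dec; rabs. Qed.
Lemma Rmax_lip a b c d e : Rabs (a - c) <= e -> Rabs (b - d) <= e -> Rabs (Rmax a b - Rmax c d) <= e.
Proof. intros. unfold Rmax. repeat destruct Rle_dec; rabs. Qed.

Lemma QR_neg p q d : QR q p d = - QR p q d.
Proof. unfold QR. field. pose proof (INR_ge0 d). lra. Qed.

Lemma QR_nat i W : (0 < W)%nat -> QR i 0 (W - 1) = INR i / INR W.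
Proof. intros. unfold QR. rewrite INR_pm1 by auto. simpl. f_equal. lra. Qed.

Open Scope R_scope.

Lemma npow2_pos n : (0 < 2 ^ n)%nat.
Proof. induction n; simpl; lia. Qed.

Lemma nat_test (G1 G2 G3 N : nat) : (G3 + 2 - (G1 - G2) * 2 ^ N = 0)%nat <-> (/2)^N < QR G1 G2 G3.
Proof. rewrite QR_val. pose proof (INR_ge0 G3) as P1. pose proof (pow2_pos N) as P2.
  assert (E : (/2)^N < (INR G1 - INR G2) / (INR G3 + 1) <-> INR G3 + 1 < (INR G1 - INR G2) * 2^N).
  { rewrite half_inv. split; intros HH.
    - apply Rmult_lt_compat_r with (r := (INR G3 + 1) * 2^N) in HH; [|nra].
      replace ((INR G1 - INR G2) / (INR G3 + 1) * ((INR G3 + 1) * 2 ^ N)) with ((INR G1 - INR G2) * 2^N) in HH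
        by (field; lra).
      replace (/ 2 ^ N * ((INR G3 + 1) * 2 ^ N)) with (INR G3 + 1) in HH by (field; lra). lra.
    - apply Rmult_lt_reg_r with ((INR G3 + 1) * 2^N). nra.
      replace ((INR G1 - INR G2) / (INR G3 + 1) * ((INR G3 + 1) * 2 ^ N)) with ((INR G1 - INR G2) * 2^N)
        by (field; lra).
      replace (/ 2 ^ N * ((INR G3 + 1) * 2 ^ N)) with (INR G3 + 1) by (field; lra). lra. }
  rewrite E. clear E. destruct (le_lt_dec G1 G2) as [L|L].
  - replace (G1 - G2)%nat with 0%nat by lia. apply le_INR in L. split; intros; [lia| nra].
  - rewrite <- INR_pow2. split; intros HH.
    + assert (Q : (G3 + 1 < (G1 - G2) * 2 ^ N)%nat) by lia. apply lt_INR in Q.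
      rewrite mult_INR, minus_INR in Q by lia. rewrite plus_INR in Q. simpl in Q. lra.
    + assert (Q : INR (G3 + 1) < INR ((G1 - G2) * 2 ^ N)).
      { rewrite mult_INR, minus_INR by lia. rewrite plus_INR. simpl. lra. }
      apply INR_lt in Q. lia. Qed.

Lemma nat_test' (G1 G2 G3 N : nat) : (G3 + 2 - (G2 - G1) * 2 ^ N = 0)%nat <-> QR G1 G2 G3 < - (/2)^N.
Proof. rewrite nat_test, QR_neg. lra. Qed.

Lemma cf_neg f : computable_fun f -> computable_fun (fun y => - f y).
Proof. intros [[m [Hm Hmod]] [g1 [g2 [g3 [H1 [H2 [H3 Happ]]]]]]]. split.
  - exists m. split; auto. intros. replace (- f x - - f y) with (- (f x - f y)) by ring.
    rewrite Rabs_Ropp. auto.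
  - exists g2, g1, g3. repeat split; auto. intros. rewrite QR_neg.
    replace (- QR (g1 p q d n) (g2 p q d n) (g3 p q d n) - - f (QR p q d)) with
      (- (QR (g1 p q d n) (g2 p q d n) (g3 p q d n) - f (QR p q d))) by ring. rewrite Rabs_Ropp. auto. Qed.

Lemma const_real p q d : computable_real (QR p q d).
Proof. exists (fun _ => p), (fun _ => q), (fun _ => d). repeat split.
  - apply (comp1_ex (EC p)). simpl; auto.
  - apply (comp1_ex (EC q)). simpl; auto.
  - apply (comp1_ex (EC d)). simpl; auto.
  - intros. rewrite Rminus_diag, Rabs_R0. left; apply half_pos. Qed.

Lemma bit_val (G1 G2 : nat) : (1 - (G1 + 1 - G2) = if Nat.ltb G1 G2 then 1 else 0)%nat.
Proof. destruct (Nat.ltb_spec G1 G2); lia. Qed.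

Lemma mod_use f m : (forall n x y, 0 <= x <= 1 -> 0 <= y <= 1 -> Rabs (x - y) <= (/2) ^ (m n) ->
       Rabs (f x - f y) <= (/2) ^ n) -> True. Proof. auto. Qed.

Lemma ivt_comp f : computable_fun f -> f 0 < 0 -> 0 < f 1 ->
  exists x, computable_real x /\ 0 <= x <= 1 /\ f x = 0.
Proof.
  intros Hf H0 H1.
  destruct (classic (exists p q d, 0 <= QR p q d <= 1 /\ f (QR p q d) = 0)) as [[p [q [d [Hr Hz]]]]|Hnz].
  { exists (QR p q d). split; auto. apply const_real. }
  destruct Hf as [[m [Hm Hmod]] [g1 [g2 [g3 [Hg1 [Hg2 [Hg3 Happ]]]]]]].
  destruct (comp4_code _ Hg1) as [c1 Hc1]. destruct (comp4_code _ Hg2) as [c2 Hc2].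
  destruct (comp4_code _ Hg3) as [c3 Hc3].
  (* T env [nn; j; i] *)
  set (G := fun c g a d e => EX4 c g a (EC 0) d e).
  set (Ta := EAdd (EMul (EC 2) (EV 2)) (EC 1)). set (Td := ESub (EPow (EC 2) (EAdd (EV 1) (EC 1))) (EC 1)).
  set (T := EMul (ESub (EAdd (G c3 g3 Ta Td (EV 0)) (EC 2)) (EMul (ESub (G c1 g1 Ta Td (EV 0)) (G c2 g2 Ta Td (EV 0))) (EPow (EC 2) (EV 0))))
                 (ESub (EAdd (G c3 g3 Ta Td (EV 0)) (EC 2)) (EMul (ESub (G c2 g2 Ta Td (EV 0)) (G c1 g1 Ta Td (EV 0))) (EPow (EC 2) (EV 0))))).
  set (Sa := EAdd (EMul (EC 2) (EV 1)) (EC 1)). set (Sd := ESub (EPow (EC 2) (EAdd (EV 0) (EC 1))) (EC 1)).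
  set (Nn := EMu 2 T).
  set (STEP := EAdd (EMul (EC 2) (EV 1)) (ESub (EC 1) (ESub (EAdd (G c1 g1 Sa Sd Nn) (EC 1)) (G c2 g2 Sa Sd Nn)))).
  set (IE := ERec 0 (EC 0) STEP (EV 0)).
  set (Tf := fun i j nn => ((g3 (2*i+1) 0 (2^(j+1)-1) nn + 2 - (g1 (2*i+1) 0 (2^(j+1)-1) nn - g2 (2*i+1) 0 (2^(j+1)-1) nn) * 2^nn)
     * (g3 (2*i+1) 0 (2^(j+1)-1) nn + 2 - (g2 (2*i+1) 0 (2^(j+1)-1) nn - g1 (2*i+1) 0 (2^(j+1)-1) nn) * 2^nn))%nat).
  set (Nf := fun i j => mu (fun nn => Tf i j nn)).
  set (bitf := fun i j => (1 - (g1 (2*i+1) 0 (2^(j+1)-1) (Nf i j) + 1 - g2 (2*i+1) 0 (2^(j+1)-1) (Nf i j)))%nat).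
  set (ii := fun j => rec 0 (fun j r => 2 * r + bitf r j)%nat j).
  assert (Eii : forall j, den IE [j] = ii j) by reflexivity.
  assert (EiiS : forall j, ii (S j) = (2 * ii j + bitf (ii j) j)%nat) by reflexivity.
  assert (Step : forall i j, (i + 1 <= 2^j)%nat ->
     (exists nn, Tf i j nn = 0%nat) /\
     (bitf i j = 1%nat /\ f (INR (2*i+1) / 2^(j+1)) < 0 \/ bitf i j = 0%nat /\ 0 < f (INR (2*i+1) / 2^(j+1)))).
  { intros i j Hij.
    set (c := INR (2*i+1) / 2^(j+1)).
    assert (Ec : QR (2*i+1) 0 (2^(j+1)-1) = c).
    { unfold c. rewrite QR_nat by apply npow2_pos. now rewrite INR_pow2. }
    assert (Hc01 : 0 <= c <= 1).
    { unfold c. pose proof (pow2_pos (j+1)). split. unfold Rdiv. apply Rmult_le_pos. apply INR_ge0. left; apply Rinv_0_lt_compat; auto.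
      apply Rmult_le_reg_r with (2^(j+1)); auto. unfold Rdiv. rewrite Rmult_assoc, Rinv_l; [|lra].
      rewrite <- INR_pow2. rewrite Rmult_1_r, Rmult_1_l. apply le_INR. rewrite Nat.pow_add_r. simpl. lia. }
    assert (Hfc : f c <> 0). { intros Hz. apply Hnz. exists (2*i+1)%nat, 0%nat, (2^(j+1)-1)%nat. rewrite Ec. auto. }
    assert (Ha : forall nn : nat, Rabs (QR (g1 (2*i+1)%nat 0%nat (2^(j+1)-1)%nat nn) (g2 (2*i+1)%nat 0%nat (2^(j+1)-1)%nat nn) (g3 (2*i+1)%nat 0%nat (2^(j+1)-1)%nat nn) - f c) <= (/2)^nn).
    { intros nn. rewrite <- Ec. apply Happ. rewrite Ec; auto. }
    assert (Ex : exists nn, Tf i j nn = 0%nat).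
    { assert (0 < Rabs (f c) / 2) by (pose proof (Rabs_pos_lt _ Hfc); lra).
      destruct (half_small _ H) as [nn Hnn]. exists nn. specialize (Ha nn). unfold Tf.
      apply Nat.eq_mul_0. destruct (Rlt_le_dec 0 (f c)).
      - left. apply nat_test. rewrite Rabs_pos_eq in Hnn by lra. rabs.
      - right. apply nat_test'. rewrite Rabs_left1 in Hnn by lra. rabs. }
    split; auto.
    destruct (mu_spec _ Ex) as [HT _].
    change (Tf i j (Nf i j) = 0%nat) in HT. unfold Tf in HT.
    specialize (Ha (Nf i j)). unfold bitf. rewrite bit_val.
    set (N := Nf i j) in *. set (a := (2*i+1)%nat) in *. set (dd := (2^(j+1)-1)%nat) in *.
    set (G1 := g1 a 0%nat dd N) in *. set (G2 := g2 a 0%nat dd N) in *. set (G3 := g3 a 0%nat dd N) in *.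
    pose proof (half_pos N).
    destruct (Nat.ltb_spec G1 G2).
    - left. split; auto. apply Nat.eq_mul_0 in HT. destruct HT as [HT|HT].
      + replace (G1 - G2)%nat with 0%nat in HT by lia. lia.
      + apply nat_test' in HT. rabs.
    - right. split; auto. apply Nat.eq_mul_0 in HT. destruct HT as [HT|HT].
      + apply nat_test in HT. rabs.
      + replace (G2 - G1)%nat with 0%nat in HT by lia. lia. }
  assert (Inv : forall j, (ii j + 1 <= 2^j)%nat /\ f (INR (ii j) / 2^j) < 0 /\ 0 < f (INR (ii j + 1) / 2^j)).
  { induction j.
    - change (ii 0%nat) with 0%nat. simpl. replace (0 / 1) with 0 by field. replace (1 / 1) with 1 by field. split; [lia|]. auto.
    - destruct IHj as [Hb [Hl Hr]]. destruct (Step _ _ Hb) as [_ [[Eb Hm']|[Eb Hm']]]; rewrite EiiS, Eb.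
      + replace (j+1)%nat with (S j) in Hm' by lia. split; [simpl; lia|]. split.
        * replace (2 * ii j + 1)%nat with (2 * ii j + 1)%nat by lia. exact Hm'.
        * replace (INR (2 * ii j + 1 + 1) / 2 ^ S j) with (INR (ii j + 1) / 2 ^ j); auto.
          rewrite !plus_INR, mult_INR. simpl. field. pose proof (pow2_pos j). lra.
      + replace (j+1)%nat with (S j) in Hm' by lia. split; [simpl; lia|]. split.
        * replace (INR (2 * ii j + 0) / 2 ^ S j) with (INR (ii j) / 2 ^ j); auto.
          rewrite !plus_INR, mult_INR. simpl. field. pose proof (pow2_pos j). lra.
        * replace (2 * ii j + 0 + 1)%nat with (2 * ii j + 1)%nat by lia. exact Hm'. }
  assert (WS : forall j' r, (exists n, Tf r j' n = 0%nat) -> wfv STEP [j'; r]).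
  { intros j' r H. simpl. repeat split; try exact H; try (intros; simpl; repeat split); auto. }
  assert (Hp : comp1 (fun j => den IE [j])).
  { apply comp1_ex. intros a. cbn [wfv]. split; [exact I|split;[|exact I]]. intros j' _.
    change (wfv STEP [j'; ii j']). apply WS. apply (Step _ _ (proj1 (Inv j'))). }
  set (u := fun j => INR (ii j) / 2^j).
  set (w := fun j => INR (ii j + 1) / 2^j).
  assert (Huw : forall j, u j <= w j /\ w j - u j = (/2)^j).
  { intros j. unfold u, w. rewrite plus_INR, half_inv. simpl. pose proof (pow2_pos j). split.
    apply Rmult_le_compat_r. left; apply Rinv_0_lt_compat; auto. lra. field. lra. }
  assert (Hmono : forall j, u j <= u (S j) /\ w (S j) <= w j).
  { intros j. unfold u, w. rewrite EiiS. pose proof (pow2_pos j).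
    assert (bitf (ii j) j <= 1)%nat by (unfold bitf; lia).
    assert (INR (bitf (ii j) j) <= 1) by (apply le_INR in H2; simpl in H2; exact H2).
    pose proof (INR_ge0 (bitf (ii j) j)).
    rewrite !plus_INR, mult_INR. replace (INR 2) with 2 by (simpl; lra). replace (INR 1) with 1 by reflexivity. simpl. split.
    - apply Rmult_le_reg_r with (2 * 2^j). lra. unfold Rdiv.
      replace (INR (ii j) * / 2 ^ j * (2 * 2 ^ j)) with (2 * INR (ii j)) by (field; lra).
      replace ((2 * INR (ii j) + INR (bitf (ii j) j)) * / (2 * 2 ^ j) * (2 * 2 ^ j)) with
        (2 * INR (ii j) + INR (bitf (ii j) j)) by (field; lra). lra.
    - apply Rmult_le_reg_r with (2 * 2^j). lra. unfold Rdiv.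
      replace ((INR (ii j) + 1) * / 2 ^ j * (2 * 2 ^ j)) with (2 * INR (ii j) + 2) by (field; lra).
      replace ((2 * INR (ii j) + INR (bitf (ii j) j) + 1) * / (2 * 2 ^ j) * (2 * 2 ^ j)) with
        (2 * INR (ii j) + INR (bitf (ii j) j) + 1) by (field; lra). lra. }
  assert (Hw1 : forall j, w j <= 1 /\ 0 <= u j).
  { intros j. unfold u, w. pose proof (pow2_pos j). destruct (Inv j) as [Hb _].
    apply le_INR in Hb. rewrite INR_pow2 in Hb. split.
    - apply Rmult_le_reg_r with (2^j); auto. unfold Rdiv. rewrite Rmult_assoc, Rinv_l; lra.
    - unfold Rdiv. apply Rmult_le_pos. apply INR_ge0. left; apply Rinv_0_lt_compat; auto. }
  assert (Hwdec : forall j n, (j <= n)%nat -> w n <= w j).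
  { intros j n H. induction H. lra. pose proof (proj2 (Hmono m0)). lra. }
  assert (Hg : Un_growing u). { intros j. apply Hmono. }
  assert (Hb : has_ub u). { exists 1. intros y [j ->]. pose proof (Huw j). pose proof (Hw1 j). lra. }
  destruct (growing_cv u Hg Hb) as [x Hx].
  assert (Hxl : forall j, u j <= x) by (intros; apply growing_ineq; auto).
  assert (Hxr : forall j, x <= w j).
  { intros j. apply (lim_le u x (w j) j Hx). intros n Hn. pose proof (Huw n). pose proof (Hwdec j n Hn). lra. }
  assert (Hx01 : 0 <= x <= 1).
  { pose proof (Hxl 0%nat). pose proof (Hxr 0%nat). pose proof (Hw1 0%nat). lra. }
  exists x. split; [|split; auto].
  - exists (fun j => den IE [j]), (fun _ => 0%nat), (fun j => 2^j - 1)%nat. repeat split.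
    + exact Hp.
    + apply (comp1_ex (EC 0)). simpl; auto.
    + apply (comp1_ex (ESub (EPow (EC 2) (EV 0)) (EC 1))). simpl; auto.
    + intros n. rewrite Eii, QR_nat by apply npow2_pos. rewrite INR_pow2.
      fold (u n). pose proof (Hxl n). pose proof (Hxr n). pose proof (Huw n). rabs.
  - apply zero_eps. intros n. set (j := m n).
    destruct (Inv j) as [_ [Hl Hr]]. fold (u j) in Hl. fold (w j) in Hr.
    pose proof (Hxl j). pose proof (Hxr j). pose proof (Huw j). pose proof (Hw1 j).
    assert (A1 : Rabs (f x - f (u j)) <= (/2)^n). { apply Hmod; try lra. fold j. rabs. }
    assert (A2 : Rabs (f x - f (w j)) <= (/2)^n). { apply Hmod; try lra. fold j. rabs. }
    rabs.
Qed.

Open Scope R_scope.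

Lemma floor_ex y (W : nat) : 0 <= y <= 1 -> (0 < W)%nat ->
  exists i : nat, (i <= W)%nat /\ INR i <= y * INR W < INR i + 1.
Proof. intros Hy HW. set (z := y * INR W). assert (Hz : 0 <= z <= INR W).
  { unfold z. pose proof (INR_ge0 W). split. nra. nra. }
  destruct (archimed z) as [A1 A2].
  assert (Hu : (1 <= up z)%Z). { assert (0 < IZR (up z)) by lra. apply lt_0_IZR in H. lia. }
  exists (Z.to_nat (up z - 1)).
  assert (E : INR (Z.to_nat (up z - 1)) = IZR (up z) - 1).
  { rewrite INR_IZR_INZ, Z2Nat.id by lia. rewrite minus_IZR. reflexivity. }
  rewrite E. split; [|lra]. apply INR_le. rewrite E. lra. Qed.

Lemma sq_char n t : (t * t <= n < (t+1)*(t+1))%nat -> mu (fun t => (n + 1 - (t+1)*(t+1))%nat) = t.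
Proof. intros [H1 H2]. assert (Ex : exists t, (n + 1 - (t+1)*(t+1) = 0)%nat) by (exists t; lia).
  destruct (mu_spec _ Ex) as [A B]. set (s := mu _) in *.
  destruct (lt_eq_lt_dec s t) as [[L|L]|L]; auto.
  - exfalso. assert (s + 1 <= t)%nat by lia. assert ((s+1)*(s+1) <= t * t)%nat by nia. lia.
  - exfalso. apply (B t L). lia. Qed.

Definition sqf n := mu (fun t => (n + 1 - (t+1)*(t+1))%nat).
Definition rf n := (n - sqf n * sqf n)%nat.
Definition iF n := (rf n - (rf n - sqf n))%nat.
Definition kF n := (sqf n - (rf n - sqf n))%nat.

Lemma unpair_surj i k : exists n, iF n = i /\ kF n = k.
Proof. destruct (le_lt_dec i k).
  - exists (k*k + i)%nat. assert (E : sqf (k*k+i) = k) by (apply sq_char; nia).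
    unfold iF, kF, rf. rewrite E. split; lia.
  - exists (i*i + 2*i - k)%nat. assert (E : sqf (i*i + 2*i - k) = i) by (apply sq_char; nia).
    unfold iF, kF, rf. rewrite E. split; nia. Qed.

Lemma bit_le (a b : nat) : (1 - (a - b) = 1 <-> a <= b)%nat. Proof. lia. Qed.

Lemma zero_closed f m : (forall n x y, 0 <= x <= 1 -> 0 <= y <= 1 -> Rabs (x - y) <= (/2) ^ (m n) ->
       Rabs (f x - f y) <= (/2) ^ n) -> closed_set (fun y => 0 <= y <= 1 /\ f y = 0).
Proof. intros Hmod x Hx. unfold complementary in Hx.
  destruct (Rlt_dec x 0) as [L|L].
  { exists (mkposreal (-x) ltac:(lra)). intros y Hy. unfold disc in Hy; simpl in Hy.
    unfold complementary. intros [[? ?] ?]. rabs. }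
  destruct (Rlt_dec 1 x) as [L2|L2].
  { exists (mkposreal (x-1) ltac:(lra)). intros y Hy. unfold disc in Hy; simpl in Hy.
    unfold complementary. intros [[? ?] ?]. rabs. }
  assert (Hf : f x <> 0) by (intros E; apply Hx; split; [lra|auto]).
  destruct (half_small (Rabs (f x)) ltac:(apply Rabs_pos_lt; auto)) as [n Hn].
  exists (mkposreal ((/2)^(m n)) (half_pos _)). intros y Hy. unfold disc in Hy; simpl in Hy.
  unfold complementary. intros [Hy01 Hfy]. assert (Rabs (f y - f x) <= (/2)^n) by (apply Hmod; try lra; rabs).
  rewrite Hfy in H. rabs. Qed.

Lemma zero_coce f : computable_fun f -> co_ce_closed (fun y => 0 <= y <= 1 /\ f y = 0).
Proof.
  intros [[m [Hm Hmod]] [g1 [g2 [g3 [Hg1 [Hg2 [Hg3 Happ]]]]]]].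
  split; [intros x [H _]; exact H|]. split; [eapply zero_closed; eauto|].
  destruct (comp1_code _ Hm) as [cm Hcm].
  destruct (comp4_code _ Hg1) as [c1 Hc1]. destruct (comp4_code _ Hg2) as [c2 Hc2].
  destruct (comp4_code _ Hg3) as [c3 Hc3].
  set (tt := EMu 1 (ESub (EAdd (EV 1) (EC 1)) (EMul (EAdd (EV 0) (EC 1)) (EAdd (EV 0) (EC 1))))).
  set (rr := ESub (EV 0) (EMul tt tt)).
  set (ia := ESub rr (ESub rr tt)). set (kb := ESub tt (ESub rr tt)).
  set (W := EPow (EC 2) (EX1 cm m (EAdd kb (EC 2)))). set (Wm1 := ESub W (EC 1)).
  set (G := fun c g => EX4 c g ia (EC 0) Wm1 (EAdd kb (EC 2))).
  set (b1 := ESub (EC 1) (ESub (EAdd (G c3 g3) (EC 2)) (EMul (ESub (G c1 g1) (G c2 g2)) (EPow (EC 2) kb)))).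
  set (b2 := ESub (EC 1) (ESub (EAdd (G c3 g3) (EC 2)) (EMul (ESub (G c2 g2) (G c1 g1)) (EPow (EC 2) kb)))).
  set (vv := EMul (ESub (EC 1) (ESub ia W)) (ESub (EC 1) (ESub (EC 1) (EAdd b1 b2)))).
  set (Wf := fun n => (2 ^ m (kF n + 2))%nat).
  set (Gf := fun (g : nat -> nat -> nat -> nat -> nat) n => g (iF n) 0%nat (Wf n - 1)%nat (kF n + 2)%nat).
  set (b1f := fun n => (1 - (Gf g3 n + 2 - (Gf g1 n - Gf g2 n) * 2 ^ kF n))%nat).
  set (b2f := fun n => (1 - (Gf g3 n + 2 - (Gf g2 n - Gf g1 n) * 2 ^ kF n))%nat).
  set (vf := fun n => ((1 - (iF n - Wf n)) * (1 - (1 - (b1f n + b2f n))))%nat).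
  assert (WF : forall E, (forall a, wfv E [a]) -> comp1 (fun a => den E [a])) by (intros; apply comp1_ex; auto).
  assert (Htt : forall a, wfv tt [a]).
  { intros a. unfold tt. cbn [wfv]. split. exists a. cbn. nia. intros; cbn; tauto. }
  assert (Hrr : forall a, wfv rr [a]) by (intros; unfold rr; cbn [wfv]; auto).
  assert (Hia : forall a, wfv ia [a]) by (intros; unfold ia; cbn [wfv]; auto).
  assert (Hkb : forall a, wfv kb [a]) by (intros; unfold kb; cbn [wfv]; auto).
  assert (HW : forall a, wfv W [a]) by (intros; unfold W; cbn [wfv]; auto 6).
  assert (HWm1 : forall a, wfv Wm1 [a]) by (intros; unfold Wm1; cbn [wfv]; auto).
  assert (HG : forall a c g, (forall x y z w, eval c [x;y;z;w] (g x y z w)) -> wfv (G c g) [a])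
    by (intros; unfold G; cbn [wfv]; auto 10).
  assert (Hb1 : forall a, wfv b1 [a]) by (intros; unfold b1; cbn [wfv]; auto 10).
  assert (Hb2 : forall a, wfv b2 [a]) by (intros; unfold b2; cbn [wfv]; auto 10).
  assert (Hvv : forall a, wfv vv [a]) by (intros; unfold vv; cbn [wfv]; auto 10).
  exists (fun n => den (EMul ia vv) [n]), (fun n => den vv [n]), (fun n => den Wm1 [n]),
         (fun n => den (EMul (EAdd ia (EC 1)) vv) [n]), (fun n => den (EC 0) [n]), (fun n => den Wm1 [n]).
  split. apply WF. intros; cbn [wfv]; auto.
  split. apply WF. intros; cbn [wfv]; auto.
  split. apply WF. intros; cbn [wfv]; auto.
  split. apply WF. intros; cbn [wfv]; auto.
  split. apply WF. intros; cbn [wfv]; auto.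
  split. apply WF. intros; cbn [wfv]; auto.
  assert (Eia : forall n, den ia [n] = iF n) by reflexivity.
  assert (Ekb : forall n, den kb [n] = kF n) by reflexivity.
  assert (EWm1 : forall n, den Wm1 [n] = (Wf n - 1)%nat) by reflexivity.
  assert (Evv : forall n, den vv [n] = vf n) by reflexivity.
  assert (EA : forall n, den (EMul ia vv) [n] = (iF n * vf n)%nat) by reflexivity.
  assert (EB : forall n, den (EMul (EAdd ia (EC 1)) vv) [n] = ((iF n + 1) * vf n)%nat) by reflexivity.
  assert (HWpos : forall n, (0 < Wf n)%nat) by (intros; apply npow2_pos).
  assert (HWr : forall n, INR (Wf n) = 2 ^ (m (kF n + 2)%nat)) by (intros; apply INR_pow2).
  set (Af := fun n => QR (Gf g1 n) (Gf g2 n) (Gf g3 n)).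
  assert (Valid : forall n, (vf n = 1%nat <-> ((iF n <= Wf n)%nat /\ (/2)^(kF n) < Rabs (Af n)))
                   /\ (vf n = 0%nat \/ vf n = 1%nat)).
  { intros n. assert (T1 := nat_test (Gf g1 n) (Gf g2 n) (Gf g3 n) (kF n)).
    assert (T2 := nat_test' (Gf g1 n) (Gf g2 n) (Gf g3 n) (kF n)).
    fold (Af n) in T1, T2. unfold vf, b1f, b2f. pose proof (half_pos (kF n)). split; [|lia].
    split.
    - intros Hv. assert (V1 : (1 - (iF n - Wf n) = 1)%nat) by nia.
      assert (V2 : (1 - (1 - (b1f n + b2f n)) = 1)%nat) by (unfold b1f, b2f; nia).
      split; [lia|]. unfold b1f, b2f in V2.
      destruct (Nat.eq_dec (Gf g3 n + 2 - (Gf g1 n - Gf g2 n) * 2 ^ kF n) 0) as [Z1|Z1].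
      + apply T1 in Z1. rabs.
      + assert (Z2 : (Gf g3 n + 2 - (Gf g2 n - Gf g1 n) * 2 ^ kF n = 0)%nat) by lia.
        apply T2 in Z2. rabs.
    - intros [Hi Ha]. assert (V1 : (1 - (iF n - Wf n) = 1)%nat) by lia. rewrite V1.
      destruct (Rlt_dec 0 (Af n)).
      + assert (Z1 : (Gf g3 n + 2 - (Gf g1 n - Gf g2 n) * 2 ^ kF n = 0)%nat) by (apply T1; rabs).
        rewrite Z1. lia.
      + assert (Z2 : (Gf g3 n + 2 - (Gf g2 n - Gf g1 n) * 2 ^ kF n = 0)%nat) by (apply T2; rabs).
        rewrite Z2. lia. }
  assert (Happ' : forall n, (iF n <= Wf n)%nat ->
     0 <= INR (iF n) / INR (Wf n) <= 1 /\ Rabs (Af n - f (INR (iF n) / INR (Wf n))) <= (/2)^(kF n + 2)%nat).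
  { intros n Hi. pose proof (HWpos n) as P. apply lt_INR in P. simpl in P. apply le_INR in Hi.
    assert (C : 0 <= INR (iF n) / INR (Wf n) <= 1).
    { split. unfold Rdiv; apply Rmult_le_pos; [apply INR_ge0| left; apply Rinv_0_lt_compat; lra].
      apply Rmult_le_reg_r with (INR (Wf n)); auto. unfold Rdiv. rewrite Rmult_assoc, Rinv_l; lra. }
    split; auto. unfold Af, Gf. rewrite <- QR_nat by apply HWpos. apply Happ. rewrite QR_nat by apply HWpos. auto. }
  assert (Q2 : forall k, (/2)^(k+2)%nat = (/2)^k / 4).
  { intros k. rewrite half_add. simpl. field. }
  intros y Hy. split.
  - intros Hny. assert (Hfy : f y <> 0) by (intros E; apply Hny; auto).
    assert (P4 : 0 < Rabs (f y) / 4) by (pose proof (Rabs_pos_lt _ Hfy); lra).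
    destruct (half_small _ P4) as [k Hk].
    destruct (floor_ex y (2 ^ m (k+2))%nat Hy (npow2_pos _)) as [i [Hi Hfl]].
    destruct (unpair_surj i k) as [n [Ei Ek]]. exists n.
    rewrite EA, EB, EWm1, Evv.
    assert (EW : Wf n = (2 ^ m (k+2))%nat) by (unfold Wf; rewrite Ek; reflexivity).
    rewrite <- EW in Hi, Hfl. rewrite <- Ei in Hi, Hfl.
    destruct (Happ' n Hi) as [C HA]. rewrite Ek in HA.
    pose proof (HWpos n) as P. apply lt_INR in P. simpl in P.
    assert (Hc : Rabs (INR (iF n) / INR (Wf n) - y) <= (/2)^(m (k+2)%nat)).
    { rewrite half_inv, <- INR_pow2, <- EW.
      replace (INR (iF n) / INR (Wf n) - y) with ((INR (iF n) - y * INR (Wf n)) / INR (Wf n)) by (field; lra).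
      unfold Rdiv. rewrite Rabs_mult, Rabs_inv, (Rabs_pos_eq (INR (Wf n))) by lra.
      rewrite <- (Rmult_1_l (/ INR (Wf n))) at 2. apply Rmult_le_compat_r. left; apply Rinv_0_lt_compat; lra. rabs. }
    assert (Hfc : Rabs (f (INR (iF n) / INR (Wf n)) - f y) <= (/2)^(k+2)%nat) by (apply Hmod; auto).
    assert (Hv : vf n = 1%nat).
    { apply (proj1 (Valid n)). split; auto. rewrite Ek. rewrite Q2 in HA, Hfc.
      pose proof (half_pos k). rabs. }
    rewrite Hv, !Nat.mul_1_r. rewrite !QR_val. rewrite INR_pm1 by apply HWpos. rewrite plus_INR.
    change (INR 1) with 1. change (INR 0) with 0.
    split.
    + apply Rmult_lt_reg_r with (INR (Wf n)); auto. unfold Rdiv. rewrite Rmult_assoc, Rinv_l; lra.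
    + apply Rmult_lt_reg_r with (INR (Wf n)); auto. unfold Rdiv. rewrite Rmult_assoc, Rinv_l. change (INR (den (EC 0) [n])) with 0. lra. lra.
  - intros [n Hn]. rewrite EA, EB, EWm1, Evv in Hn. change (den (EC 0) [n]) with 0%nat in Hn. destruct (proj2 (Valid n)) as [Hv|Hv].
    + rewrite Hv, !Nat.mul_0_r in Hn. unfold QR in Hn. change (INR 0) with 0 in Hn. unfold Rdiv in Hn. lra.
    + destruct (proj1 (proj1 (Valid n)) Hv) as [Hi Ha].
      rewrite Hv, !Nat.mul_1_r in Hn. rewrite !QR_val in Hn. rewrite INR_pm1 in Hn by apply HWpos.
      rewrite plus_INR in Hn. change (INR 1) with 1 in Hn. change (INR 0) with 0 in Hn.
      pose proof (HWpos n) as P. apply lt_INR in P. simpl in P.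
      destruct (Happ' n Hi) as [C HA].
      assert (Hc : Rabs (INR (iF n) / INR (Wf n) - y) <= (/2)^(m (kF n + 2)%nat)).
      { rewrite half_inv, <- HWr.
        destruct Hn as [Hn1 Hn2].
        apply Rmult_lt_compat_r with (r := INR (Wf n)) in Hn1; auto.
        apply Rmult_lt_compat_r with (r := INR (Wf n)) in Hn2; auto.
        unfold Rdiv in Hn1, Hn2. rewrite Rmult_assoc, Rinv_l in Hn1, Hn2 by lra.
        replace (INR (iF n) / INR (Wf n) - y) with ((INR (iF n) - y * INR (Wf n)) / INR (Wf n)) by (field; lra).
        unfold Rdiv. rewrite Rabs_mult, Rabs_inv, (Rabs_pos_eq (INR (Wf n))) by lra.
        rewrite <- (Rmult_1_l (/ INR (Wf n))) at 2. apply Rmult_le_compat_r. left; apply Rinv_0_lt_compat; lra. rabs. }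
      assert (Hfc : Rabs (f (INR (iF n) / INR (Wf n)) - f y) <= (/2)^(kF n+2)%nat) by (apply Hmod; auto).
      rewrite Q2 in HA, Hfc. pose proof (half_pos (kF n)).
      intros [_ Hz]. rewrite Hz in Hfc. rabs.
Qed.

Open Scope R_scope.

Fixpoint psum (h : nat -> R -> R) (K : nat) (y : R) : R :=
  match K with 0 => 0 | S k => psum h k y + (/2)^k * h k y end.

Lemma psum_props h : (forall k y, 0 <= h k y <= 1) ->
  forall y K, 0 <= psum h K y <= 2 - 2 * (/2)^K.
Proof. intros H y K. induction K; simpl. lra. pose proof (H K y). pose proof (half_pos K). nra. Qed.

Lemma psum_tail h : (forall k y, 0 <= h k y <= 1) ->
  forall y K j, 0 <= psum h (K + j) y - psum h K y <= 2 * (/2)^K - 2 * (/2)^(K+j).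
Proof. intros H y K j. induction j.
  - rewrite Nat.add_0_r. lra.
  - replace (K + S j)%nat with (S (K + j)) by lia. simpl.
    pose proof (H (K+j)%nat y). pose proof (half_pos (K+j)). nra. Qed.

Lemma psum_lip h : (forall k y z, Rabs (h k y - h k z) <= Rabs (y - z)) ->
  forall y z K, Rabs (psum h K y - psum h K z) <= (2 - 2 * (/2)^K) * Rabs (y - z).
Proof. intros H y z K. induction K; simpl. rewrite Rminus_diag, Rabs_R0. lra.
  pose proof (H K y z). pose proof (half_pos K). pose proof (Rabs_pos (y - z)).
  replace (psum h K y + (/2)^K * h K y - (psum h K z + (/2)^K * h K z)) with
    ((psum h K y - psum h K z) + (/2)^K * (h K y - h K z)) by ring.
  eapply Rle_trans. apply Rabs_triang. rewrite Rabs_mult, (Rabs_pos_eq ((/2)^K)) by lra. nra. Qed.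

Lemma series_props h : (forall k y, 0 <= h k y <= 1) -> (forall k y z, Rabs (h k y - h k z) <= Rabs (y - z)) ->
  exists g : R -> R, (forall y K, psum h K y <= g y <= psum h K y + 2 * (/2)^K) /\
    (forall y z, Rabs (g y - g z) <= 2 * Rabs (y - z)).
Proof. intros H0 Hl.
  assert (Hm : forall y, Un_growing (fun K => psum h K y)).
  { intros y K. simpl. pose proof (H0 K y). pose proof (half_pos K). nra. }
  assert (Hb : forall y, has_ub (fun K => psum h K y)).
  { intros y. exists 2. intros z [K ->]. pose proof (psum_props h H0 y K). pose proof (half_pos K). lra. }
  exists (fun y => proj1_sig (growing_cv _ (Hm y) (Hb y))).
  assert (G : forall y K, psum h K y <= proj1_sig (growing_cv _ (Hm y) (Hb y)) <= psum h K y + 2 * (/2)^K).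
  { intros y K. destruct (growing_cv _ (Hm y) (Hb y)) as [l Hlim]. simpl. split.
    - apply (growing_ineq _ _ (Hm y) Hlim).
    - apply (lim_le _ l _ K Hlim). intros n Hn. replace n with (K + (n - K))%nat by lia.
      pose proof (psum_tail h H0 y K (n - K)). pose proof (half_pos (K + (n - K))). lra. }
  split; auto. intros y z.
  apply (le_eps _ _ 4). intros K. pose proof (G y K). pose proof (G z K).
  pose proof (psum_lip h Hl y z K). pose proof (half_pos K). pose proof (Rabs_pos (y - z)).
  assert ((2 - 2 * (/2)^K) * Rabs (y - z) <= 2 * Rabs (y - z)) by nra.
  set (gy := proj1_sig _) in *. set (gz := proj1_sig _) in *. rabs. Qed.

Definition mn (a b : nat) := (a - (a - b))%nat.
Definition tuf (P Q Y K : nat) := ((2^K * P - 2^K * Q) / Y)%nat.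

Lemma mn_INR a b : INR (mn a b) = Rmin (INR a) (INR b).
Proof. unfold mn. replace (a - (a - b))%nat with (Nat.min a b) by lia. apply INR_min. Qed.

Lemma tuf_bound P Q Y K : (0 < Y)%nat ->
  INR (tuf P Q Y K) <= 2^K * Rmax 0 ((INR P - INR Q)/INR Y) < INR (tuf P Q Y K) + 1.
Proof. intros HY. unfold tuf. pose proof (INR_div (2^K * P - 2^K * Q) Y HY) as D.
  assert (E : INR (2^K * P - 2^K * Q) / INR Y = 2^K * Rmax 0 ((INR P - INR Q)/INR Y)).
  { rewrite INR_sub, !mult_INR, INR_pow2. pose proof (pow2_pos K). apply lt_INR in HY. simpl in HY.
    unfold Rmax. destruct (Rle_dec 0 (2 ^ K * INR P - 2 ^ K * INR Q)); destruct (Rle_dec 0 ((INR P - INR Q) / INR Y)).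
    - field. lra.
    - exfalso. apply n. unfold Rdiv. apply Rmult_le_pos. nra. left; apply Rinv_0_lt_compat; lra.
    - exfalso. apply n. assert (0 <= INR P - INR Q).
      { apply Rmult_le_reg_r with (/ INR Y). apply Rinv_0_lt_compat; lra. rewrite Rmult_0_l. exact r. }
      nra.
    - unfold Rdiv. ring. }
  rewrite E in D. exact D. Qed.

Lemma diff_QR p q d a b c : (INR (p*(c+1) + b*(d+1)) - INR (q*(c+1) + a*(d+1))) / INR ((d+1)*(c+1)) = QR p q d - QR a b c.
Proof. unfold QR. rewrite !plus_INR, !mult_INR, !plus_INR. change (INR 1) with 1.
  pose proof (INR_ge0 c). pose proof (INR_ge0 d). field. lra. Qed.

Lemma rmin_approx a A b B : a - 1 < A <= a -> b - 1 < B <= b -> Rmin a b - 1 < Rmin A B <= Rmin a b.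
Proof. intros. unfold Rmin. repeat destruct Rle_dec; lra. Qed.

Lemma Rmin_scale c a b : 0 < c -> c * Rmin a b = Rmin (c*a) (c*b).
Proof. intros. unfold Rmin. repeat destruct Rle_dec; try lra; nra. Qed.
Lemma Rmax_scale c a b : 0 < c -> c * Rmax a b = Rmax (c*a) (c*b).
Proof. intros. unfold Rmax. repeat destruct Rle_dec; try lra; nra. Qed.

Definition hf (a1 a2 a3 b1 b2 b3 : nat -> nat) (j p q d K : nat) : nat :=
  mn (mn (tuf (p*(a3 j+1) + a2 j*(d+1)) (q*(a3 j+1) + a1 j*(d+1)) ((d+1)*(a3 j+1)) K)
         (tuf (b1 j*(d+1) + q*(b3 j+1)) (b2 j*(d+1) + p*(b3 j+1)) ((b3 j+1)*(d+1)) K)) (2^K).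

Definition hR (a1 a2 a3 b1 b2 b3 : nat -> nat) (k : nat) (y : R) : R :=
  Rmin (Rmin (Rmax 0 (y - QR (a1 k) (a2 k) (a3 k))) (Rmax 0 (QR (b1 k) (b2 k) (b3 k) - y))) 1.

Lemma hf_bound a1 a2 a3 b1 b2 b3 j p q d K :
  2^K * hR a1 a2 a3 b1 b2 b3 j (QR p q d) - 1 < INR (hf a1 a2 a3 b1 b2 b3 j p q d K)
    <= 2^K * hR a1 a2 a3 b1 b2 b3 j (QR p q d).
Proof. unfold hf, hR. rewrite !mn_INR, INR_pow2. pose proof (pow2_pos K).
  rewrite !Rmin_scale by auto. rewrite Rmult_1_r.
  apply rmin_approx; [|lra]. apply rmin_approx.
  - pose proof (tuf_bound (p*(a3 j+1) + a2 j*(d+1)) (q*(a3 j+1) + a1 j*(d+1)) ((d+1)*(a3 j+1)) K ltac:(lia)).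
    rewrite diff_QR in H0. lra.
  - pose proof (tuf_bound (b1 j*(d+1) + q*(b3 j+1)) (b2 j*(d+1) + p*(b3 j+1)) ((b3 j+1)*(d+1)) K ltac:(lia)).
    rewrite diff_QR in H0. lra. Qed.

Lemma pow_sub_INR K j : (j <= K)%nat -> INR (2^(K-j)) = 2^K * (/2)^j.
Proof. intros H. rewrite INR_pow2. assert (E : 2^K = 2^(K-j) * 2^j) by (rewrite <- pow_add; f_equal; lia).
  rewrite E, Rmult_assoc, (Rmult_comm (2^j)), half_mul. ring. Qed.

Lemma sum_bound a1 a2 a3 b1 b2 b3 p q d K N : (N <= K)%nat ->
  2^K*2^K*psum (hR a1 a2 a3 b1 b2 b3) N (QR p q d) - 2*2^K*(1 - (/2)^N)
   <= INR (rec 0 (fun j r => r + hf a1 a2 a3 b1 b2 b3 j p q d K * 2^(K-j)) N)%nat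
   <= 2^K*2^K*psum (hR a1 a2 a3 b1 b2 b3) N (QR p q d).
Proof. intros HN. induction N; simpl.
  - lra.
  - rewrite plus_INR, mult_INR, pow_sub_INR by lia.
    pose proof (hf_bound a1 a2 a3 b1 b2 b3 N p q d K). pose proof (half_pos N). pose proof (pow2_pos K).
    destruct (IHN ltac:(lia)) as [I1 I2].
    set (hh := hR a1 a2 a3 b1 b2 b3 N (QR p q d)) in *.
    set (F := INR (hf a1 a2 a3 b1 b2 b3 N p q d K)) in *.
    assert (C : 0 < 2^K * (/2)^N) by (apply Rmult_lt_0_compat; auto).
    assert (U1 : F * (2^K*(/2)^N) <= 2^K*hh*(2^K*(/2)^N)) by (apply Rmult_le_compat_r; lra).
    assert (U2 : (2^K*hh - 1) * (2^K*(/2)^N) <= F * (2^K*(/2)^N)) by (apply Rmult_le_compat_r; lra).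
    split; nra. Qed.

Lemma hR_props a1 a2 a3 b1 b2 b3 :
  (forall k y, 0 <= hR a1 a2 a3 b1 b2 b3 k y <= 1) /\
  (forall k y z, Rabs (hR a1 a2 a3 b1 b2 b3 k y - hR a1 a2 a3 b1 b2 b3 k z) <= Rabs (y - z)) /\
  (forall k y, 0 < hR a1 a2 a3 b1 b2 b3 k y <-> QR (a1 k) (a2 k) (a3 k) < y < QR (b1 k) (b2 k) (b3 k)).
Proof. unfold hR. split; [|split].
  - intros. unfold Rmin, Rmax. repeat destruct Rle_dec; lra.
  - intros. apply Rmin_lip; [|rewrite Rminus_diag, Rabs_R0; apply Rabs_pos].
    apply Rmin_lip; apply Rmax_lip; try (rewrite Rminus_diag, Rabs_R0; apply Rabs_pos); rabs.
  - intros. unfold Rmin, Rmax. repeat destruct Rle_dec; lra. Qed.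

Lemma QR_combine p q d px qx dx S W : (0 < W)%nat ->
  QR ((p*(dx+1) + qx*(d+1))*S) ((px*(d+1) + q*(dx+1))*S) ((d+1)*(dx+1)*(W*W) - 1)
   = (QR p q d - QR px qx dx) * INR S / (INR W * INR W).
Proof. intros HW. unfold QR. rewrite INR_pm1 by nia. repeat rewrite ?mult_INR, ?plus_INR. change (INR 1) with 1.
  pose proof (INR_ge0 d). pose proof (INR_ge0 dx). apply lt_INR in HW. simpl in HW. field. split; lra. Qed.

Lemma build_f (B : R -> Prop) (x : R) :
  (forall y, B y -> 0 < y < 1) -> co_ce_closed B -> computable_real x -> 0 < x < 1 ->
  exists f, computable_fun f /\ f 0 * f 1 < 0 /\ forall y, (0 <= y <= 1 /\ f y = 0) <-> (B y \/ y = x).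
Proof.
  intros HB [_ [_ [a1 [a2 [a3 [b1 [b2 [b3 [Ha1 [Ha2 [Ha3 [Hb1 [Hb2 [Hb3 Hen]]]]]]]]]]]]]] [px [qx [dx [Hpx [Hqx [Hdx Hx]]]]]] Hx01.
  set (h := hR a1 a2 a3 b1 b2 b3).
  destruct (hR_props a1 a2 a3 b1 b2 b3) as [H01 [Hlip Hpos]]. fold h in H01, Hlip, Hpos.
  destruct (series_props h H01 Hlip) as [g [Hg Hglip]].
  assert (Hg0 : forall y, 0 <= g y <= 2).
  { intros y. pose proof (Hg y 0%nat). simpl in H. lra. }
  assert (Hgz : forall y, g y = 0 <-> forall k, h k y = 0).
  { intros y. split.
    - intros E k. destruct (H01 k y) as [L _]. destruct L as [L|L]; auto. exfalso.
      pose proof (Hg y (S k)) as [G _]. simpl in G. pose proof (psum_props h H01 y k). pose proof (half_pos k).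
      assert (0 < (/2)^k * h k y) by (apply Rmult_lt_0_compat; auto). lra.
    - intros Z. assert (P0 : forall K, psum h K y = 0).
      { induction K; simpl; auto. rewrite IHK, Z. ring. }
      apply zero_eps. intros K. pose proof (Hg y (K+1)%nat). rewrite P0 in H. rewrite half_add in H.
      simpl in H. rewrite Rabs_pos_eq; lra. }
  assert (Hgpos : forall y, 0 <= y <= 1 -> ~ B y -> 0 < g y).
  { intros y Hy Hn. destruct (proj1 (Hen y Hy) Hn) as [k Hk]. apply Hpos in Hk.
    destruct (Hg0 y) as [[L|L] _]; auto. exfalso. symmetry in L. rewrite Hgz in L. specialize (L k). lra. }
  exists (fun y => (y - x) * g y). split; [|split].
  - split.
    { exists (fun n => n + 2)%nat. split. apply (comp1_ex (EAdd (EV 0) (EC 2))). intros; cbn; auto.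
      intros n y z Hy Hz Hyz.
      replace ((y - x) * g y - (z - x) * g z) with ((y - z) * g y + (z - x) * (g y - g z)) by ring.
      eapply Rle_trans. apply Rabs_triang. rewrite !Rabs_mult.
      pose proof (Hglip y z). pose proof (Hg0 y). pose proof (Rabs_pos (y - z)). pose proof (Rabs_pos (g y - g z)).
      assert (Rabs (z - x) <= 1) by rabs. rewrite (Rabs_pos_eq (g y)) by lra.
      assert ((/2)^(n+2)%nat = (/2)^n / 4) by (rewrite half_add; simpl; field).
      rewrite H4 in Hyz. nra. }
    destruct (comp1_code _ Ha1) as [ca1 Hca1]. destruct (comp1_code _ Ha2) as [ca2 Hca2].
    destruct (comp1_code _ Ha3) as [ca3 Hca3]. destruct (comp1_code _ Hb1) as [cb1 Hcb1].
    destruct (comp1_code _ Hb2) as [cb2 Hcb2]. destruct (comp1_code _ Hb3) as [cb3 Hcb3].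
    destruct (comp1_code _ Hpx) as [cpx Hcpx]. destruct (comp1_code _ Hqx) as [cqx Hcqx].
    destruct (comp1_code _ Hdx) as [cdx Hcdx].
    set (Kx := EAdd (EV 5) (EC 3)). set (WK := EPow (EC 2) Kx).
    set (A1 := EX1 ca1 a1 (EV 0)). set (A2 := EX1 ca2 a2 (EV 0)). set (A3 := EX1 ca3 a3 (EV 0)).
    set (B1 := EX1 cb1 b1 (EV 0)). set (B2 := EX1 cb2 b2 (EV 0)). set (B3 := EX1 cb3 b3 (EV 0)).
    set (dd1 := EAdd (EV 4) (EC 1)).
    set (Pu := EAdd (EMul (EV 2) (EAdd A3 (EC 1))) (EMul A2 dd1)).
    set (Qu := EAdd (EMul (EV 3) (EAdd A3 (EC 1))) (EMul A1 dd1)).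
    set (Yu := EMul dd1 (EAdd A3 (EC 1))).
    set (Pv := EAdd (EMul B1 dd1) (EMul (EV 3) (EAdd B3 (EC 1)))).
    set (Qv := EAdd (EMul B2 dd1) (EMul (EV 2) (EAdd B3 (EC 1)))).
    set (Yv := EMul (EAdd B3 (EC 1)) dd1).
    set (tuE := fun P Q Y => EDiv (ESub (EMul WK P) (EMul WK Q)) Y).
    set (mnE := fun a b => ESub a (ESub a b)).
    set (hE := mnE (mnE (tuE Pu Qu Yu) (tuE Pv Qv Yv)) WK).
    set (STEP := EAdd (EV 1) (EMul hE (EPow (EC 2) (ESub Kx (EV 0))))).
    set (SS := ERec 4 (EC 0) STEP (EAdd (EV 3) (EC 3))).
    set (Kt := EAdd (EV 3) (EC 3)).
    set (PX := EX1 cpx px Kt). set (QX := EX1 cqx qx Kt). set (DX := EX1 cdx dx Kt).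
    set (G1E := EMul (EAdd (EMul (EV 0) (EAdd DX (EC 1))) (EMul QX (EAdd (EV 2) (EC 1)))) SS).
    set (G2E := EMul (EAdd (EMul PX (EAdd (EV 2) (EC 1))) (EMul (EV 1) (EAdd DX (EC 1)))) SS).
    set (G3E := ESub (EMul (EMul (EAdd (EV 2) (EC 1)) (EAdd DX (EC 1))) (EMul (EPow (EC 2) Kt) (EPow (EC 2) Kt))) (EC 1)).
    set (Sf := fun p q d n => (rec 0 (fun j r => r + hf a1 a2 a3 b1 b2 b3 j p q d (n+3) * 2^(n+3-j)) (n+3))%nat).
    assert (ESS : forall p q d n, den SS [p;q;d;n] = Sf p q d n) by reflexivity.
    assert (WSS : forall p q d n, wfv SS [p;q;d;n]).
    { intros. unfold SS. cbn [wfv]. split; [exact I|split; [|cbn; auto]]. intros j _.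
      generalize (rec (den (EC 0) (plist 4 [p; q; d; n])) (fun j0 r : nat => den STEP (j0 :: r :: plist 4 [p; q; d; n])) j).
      intros r. unfold STEP, hE, mnE, tuE, WK, Kx, Pu, Qu, Yu, Pv, Qv, Yv, A1, A2, A3, B1, B2, B3, dd1.
      cbn [wfv]. repeat split; auto; cbn; nia. }
    clearbody SS.
    assert (WT : forall E, (forall p q d n, wfv E [p;q;d;n]) -> comp4 (fun p q d n => den E [p;q;d;n])).
    { intros. apply comp4_ex. auto. }
    exists (fun p q d n => den G1E [p;q;d;n]), (fun p q d n => den G2E [p;q;d;n]), (fun p q d n => den G3E [p;q;d;n]).
    split. apply WT. intros. unfold G1E, DX, QX, Kt. cbn [wfv]. repeat split; auto.
    split. apply WT. intros. unfold G2E, DX, PX, Kt. cbn [wfv]. repeat split; auto.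
    split. apply WT. intros. unfold G3E, DX, Kt. cbn [wfv]. repeat split; auto.
    intros p q d n Hr.
    assert (E1 : den G1E [p;q;d;n] = ((p*(dx (n+3) + 1) + qx (n+3) * (d+1)) * Sf p q d n)%nat) by (unfold G1E, DX, QX, Kt; cbn [den nth]; rewrite ESS; reflexivity).
    assert (E2 : den G2E [p;q;d;n] = ((px (n+3) * (d+1) + q*(dx (n+3) + 1)) * Sf p q d n)%nat) by (unfold G2E, DX, PX, Kt; cbn [den nth]; rewrite ESS; reflexivity).
    assert (E3 : den G3E [p;q;d;n] = ((d+1)*(dx (n+3) + 1)*(2^(n+3) * 2^(n+3)) - 1)%nat) by reflexivity.
    rewrite E1, E2, E3, QR_combine by apply npow2_pos. rewrite INR_pow2.
    pose proof (sum_bound a1 a2 a3 b1 b2 b3 p q d (n+3) (n+3) (le_n _)) as SB.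
    change (rec 0 (fun j r => r + hf a1 a2 a3 b1 b2 b3 j p q d (n+3) * 2^(n+3-j)) (n+3))%nat with (Sf p q d n) in SB.
    fold h in SB.
    set (K := (n+3)%nat) in *. set (r := QR p q d) in *. set (xK := QR (px K) (qx K) (dx K)).
    set (S := INR (Sf p q d n)) in *.
    assert (HxK : Rabs (xK - x) <= (/2)^K) by apply Hx.
    pose proof (half_mul K) as HM. pose proof (half_pos K) as HP. pose proof (pow2_pos K) as HP2.
    set (e := (/2)^K) in *. set (W := 2^K) in *.
    assert (ES : S / (W * W) = S * (e * e)).
    { unfold Rdiv. rewrite Rinv_mult. unfold e, W. rewrite half_inv. ring. }
    replace ((r - xK) * S / (W * W)) with ((r - xK) * (S / (W*W))) by (unfold Rdiv; ring). rewrite ES.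
    set (s := S * (e * e)).
    assert (Hs : psum h K r - 2 * e <= s <= psum h K r).
    { unfold s. destruct SB as [SB1 SB2]. assert (E2' : e * e * (W * W) = 1) by (replace (e*e*(W*W)) with ((e*W)*(e*W)) by ring; rewrite HM; ring).
      split.
      - apply Rmult_le_compat_r with (r := e * e) in SB1; [|nra].
        replace ((W * W * psum h K r - 2 * W * (1 - e)) * (e * e)) with (psum h K r * (e*e*(W*W)) - 2 * (W*e) * e * (1 - e)) in SB1 by ring.
        rewrite E2' in SB1. replace (W * e) with 1 in SB1 by (rewrite <- HM; ring). nra.
      - apply Rmult_le_compat_r with (r := e * e) in SB2; [|nra].
        replace (W * W * psum h K r * (e * e)) with (psum h K r * (e * e * (W * W))) in SB2 by ring.
        rewrite E2' in SB2. lra. }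
    pose proof (Hg r K) as HgK. pose proof (psum_props h H01 r K) as PP. change ((/2)^K) with e in HgK, PP.
    assert (S0 : 0 <= s) by (unfold s, S; pose proof (INR_ge0 (Sf p q d n)); nra).
    assert (Hrx : Rabs (r - x) <= 1) by rabs.
    assert (Hsg : Rabs (s - g r) <= 4 * e) by rabs.
    replace ((r - xK) * s - (r - x) * g r) with ((x - xK) * s + (r - x) * (s - g r)) by ring.
    eapply Rle_trans. apply Rabs_triang. rewrite !Rabs_mult. rewrite (Rabs_pos_eq s) by auto.
    assert (E8 : (/2)^n = 8 * e) by (unfold e, K; rewrite half_add; simpl; field).
    rewrite E8. rewrite Rabs_minus_sym in HxK.
    pose proof (Rabs_pos (x - xK)). pose proof (Rabs_pos (r - x)). pose proof (Rabs_pos (s - g r)).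
    assert (s <= 2) by lra. nra.
  - assert (~ B 0) by (intros Hb; apply HB in Hb; lra). assert (~ B 1) by (intros Hb; apply HB in Hb; lra).
    pose proof (Hgpos 0 ltac:(lra) H). pose proof (Hgpos 1 ltac:(lra) H0).
    assert (0 < x * g 0) by (apply Rmult_lt_0_compat; lra). assert (0 < (1 - x) * g 1) by (apply Rmult_lt_0_compat; lra).
    nra.
  - intros y. split.
    + intros [Hy E]. apply Rmult_integral in E. destruct E as [E|E]; [right; lra|left].
      destruct (classic (B y)) as [Hb|Hb]; auto. exfalso. pose proof (Hgpos y Hy Hb). lra.
    + intros [Hb|Hxy]; [|subst y].
      * pose proof (HB y Hb). split; [lra|]. assert (g y = 0); [|rewrite H0; ring].
        apply Hgz. intros k. destruct (H01 k y) as [[L|L] _]; auto. exfalso.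
        apply Hpos in L. apply (proj2 (Hen y ltac:(lra))); eauto.
      * split; [lra|ring].
Qed.

Open Scope R_scope.

Lemma step13 (A : R -> Prop) (HA : forall x, A x -> 0 < x < 1) :
  (exists f : R -> R, computable_fun f /\ f 0 * f 1 < 0 /\ forall x, A x <-> (0 <= x <= 1 /\ f x = 0)) ->
  (co_ce_closed A /\ exists x, computable_real x /\ 0 < x < 1 /\ A x).
Proof. intros [f [Hf [Hs Hz]]].
  assert (EA : A = (fun y => 0 <= y <= 1 /\ f y = 0)).
  { apply functional_extensionality. intros y. apply propositional_extensionality. auto. }
  split. rewrite EA. apply zero_coce; auto.
  assert (exists x, computable_real x /\ 0 <= x <= 1 /\ f x = 0) as [x [Hc [H01 Hx]]].
  { destruct (Rlt_dec (f 0) 0).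
    - apply ivt_comp; auto. nra.
    - apply Rnot_lt_le in n. assert (0 < f 0 \/ f 0 = 0) as [P|P] by lra; [|rewrite P in Hs; lra].
      assert (f 1 < 0) by nra.
      destruct (ivt_comp (fun y => - f y)) as [x [? [? ?]]]. apply cf_neg; auto. lra. lra.
      exists x. repeat split; auto; lra. }
  exists x. split; auto. assert (A x) by (apply Hz; auto). split; auto. Qed.

Lemma step32 (A : R -> Prop) (HA : forall x, A x -> 0 < x < 1) :
  (co_ce_closed A /\ exists x, computable_real x /\ 0 < x < 1 /\ A x) ->
  (exists (B : R -> Prop) (x : R), (forall y, B y -> 0 < y < 1) /\
      co_ce_closed B /\ computable_real x /\ 0 < x < 1 /\
      forall y, A y <-> (B y \/ y = x)).
Proof. intros [Hc [x [Hx [H01 Ax]]]]. exists A, x. split; auto. split; auto. split; auto. split; auto.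
  intros y. split; auto. intros [?|E]; subst; auto. Qed.

Lemma step21 (A : R -> Prop) :
  (exists (B : R -> Prop) (x : R), (forall y, B y -> 0 < y < 1) /\
      co_ce_closed B /\ computable_real x /\ 0 < x < 1 /\
      forall y, A y <-> (B y \/ y = x)) ->
  (exists f : R -> R, computable_fun f /\ f 0 * f 1 < 0 /\ forall x, A x <-> (0 <= x <= 1 /\ f x = 0)).
Proof. intros [B [x [HB [Hc [Hx [H01 HA]]]]]].
  destruct (build_f B x HB Hc Hx H01) as [f [Hf [Hs Hz]]]. exists f. split; auto. split; auto.
  intros y. rewrite HA, Hz. tauto. Qed.

Theorem proposition6p3 (A : R -> Prop)
  (HA : forall x, A x -> 0 < x < 1) (Hne : exists x, A x) :
  ((exists f : R -> R, computable_fun f /\ f 0 * f 1 < 0 /\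
      forall x, A x <-> (0 <= x <= 1 /\ f x = 0))
   <->
   (exists (B : R -> Prop) (x : R), (forall y, B y -> 0 < y < 1) /\
      co_ce_closed B /\ computable_real x /\ 0 < x < 1 /\
      forall y, A y <-> (B y \/ y = x)))
  /\
  ((exists (B : R -> Prop) (x : R), (forall y, B y -> 0 < y < 1) /\
      co_ce_closed B /\ computable_real x /\ 0 < x < 1 /\
      forall y, A y <-> (B y \/ y = x))
   <->
   (co_ce_closed A /\ exists x, computable_real x /\ 0 < x < 1 /\ A x)).
Proof.
  split; split; intros H.
  - apply step32; auto. apply step13; auto.
  - apply step21; auto.
  - apply step13; auto. apply step21; auto.
  - apply step32; auto.
Qed.
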